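(* Let $\mathcal{A}$ be the automaton whose set of states is $$S=\Big\{\pm\sum_{i=0}^3c_i\alpha^i : c_i\in\{0,1\},\ c_0c_1c_2c_3\neq1111\Big\}\cup\{\pm(\alpha^{-1}+1+\alpha^2),\ \pm(\alpha^{-2}+\alpha^{-1}+\alpha),\ \pm(\alpha^{-3}+\alpha^{-2}+1+\alpha^3)\},$$ whose edges are the triples $(s,(a,b),t)\in S\times\{0,1\}^2\times S$ with $t=\frac{s}{\alpha}+(a-b)\alpha^3$, and whose initial state is $0$. Say that a sequence $(a_n,b_n)_{n\ge l}$ in $\{0,1\}^2$ is an infinite path of $\mathcal{A}$ beginning in the initial state if there are states $(e_n)_{n\ge l}$ in $S$ with $e_l=0$ and $(e_n,(a_n,b_n),e_{n+1})$ an edge for all $n\ge l$. Then for all $(\varepsilon_i)_{i\ge l}$ and $(\varepsilon'_i)_{i\ge l}$ in $\mathcal{D}^\infty$, the following are equivalent: (1) $\sum_{i\ge l}\varepsilon_i\alpha^i=\sum_{i\ge l}\varepsilon'_i\alpha^i$; (2) $(\varepsilon_i,\varepsilon'_i)_{i\ge l}$ is an infinite path in $\mathcal{A}$ beginning in the initial state.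
   Context: Let $P(x)=x^4-x^3-x^2-x-1$. Its roots are $\beta=\beta_1\approx 1.9275$, a real root $\beta_2\approx-0.7748$, and a pair of complex conjugate roots $\beta_3\approx-0.0763+0.8147i$ and $\overline{\beta_3}$. For $i\in\mathbb{Z}$ put $\alpha^i=(\beta_2^i,\beta_3^i)\in\mathbb{R}\times\mathbb{C}$, with $\alpha^0=1=(1,1)$; arithmetic in $\mathbb{R}\times\mathbb{C}$ is componentwise and an integer $n$ is identified with $(n,n)$. Let $\mathcal{D}^\infty$ be the set of sequences $(\varepsilon_i)_{i\ge l}$, $l\in\mathbb{Z}$, with $\varepsilon_i\in\{0,1\}$ and containing no four consecutive $1$'s. *)

(* Defs.v *)
From Stdlib Require Import Reals ZArith List.
Import ListNotations.
From Coquelicot Require Import Coquelicot.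
Open Scope R_scope.

Definition PR (x : R) : R := x^4 - x^3 - x^2 - x - 1.
Definition PC (z : C) : C :=
  (Cpow z 4 - Cpow z 3 - Cpow z 2 - z - 1)%C.

Definition zpowC (z : C) (k : Z) : C :=
  match k with
  | Z0 => 1%C
  | Zpos p => Cpow z (Pos.to_nat p)
  | Zneg p => Cpow (Cinv z) (Pos.to_nat p)
  end.

(* elements of R x C; alpha^k = (b2^k, b3^k) *)
Definition RC := (R * C)%type.
Definition alz (b2 : R) (b3 : C) (k : Z) : RC := (powerRZ b2 k, zpowC b3 k).
Definition RCadd (x y : RC) : RC := (fst x + fst y, (snd x + snd y)%C).
Definition RCopp (x : RC) : RC := (- fst x, (- snd x)%C).
Definition RCscal (n : Z) (x : RC) : RC := (IZR n * fst x, (RtoC (IZR n) * snd x)%C).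
Definition RC0 : RC := (0%R, RtoC 0).

Definition b2Z (b : bool) : Z := if b then 1%Z else 0%Z.

Definition alsum (b2 : R) (b3 : C) (ks : list Z) : RC :=
  List.fold_right (fun k acc => RCadd (alz b2 b3 k) acc) RC0 ks.

Definition inS (b2 : R) (b3 : C) (s : RC) : Prop :=
  (exists (c0 c1 c2 c3 : bool),
      ~ (c0 = true /\ c1 = true /\ c2 = true /\ c3 = true) /\
      let v := RCadd (RCscal (b2Z c0) (alz b2 b3 0))
               (RCadd (RCscal (b2Z c1) (alz b2 b3 1))
               (RCadd (RCscal (b2Z c2) (alz b2 b3 2))
                      (RCscal (b2Z c3) (alz b2 b3 3)))) in
      (s = v \/ s = RCopp v))
  \/ (exists ks : list Z,
      (ks = (-1 :: 0 :: 2 :: nil)%Z \/ ks = (-2 :: -1 :: 1 :: nil)%Z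
       \/ ks = (-3 :: -2 :: 0 :: 3 :: nil)%Z) /\
      (s = alsum b2 b3 ks \/ s = RCopp (alsum b2 b3 ks))).

Definition edge_target (b2 : R) (b3 : C) (s : RC) (a b : bool) : RC :=
  RCadd (fst s / b2, (snd s / b3)%C) (RCscal (b2Z a - b2Z b) (alz b2 b3 3)).

(* (a_n, b_n)_{n >= l}, encoded as functions on nat with index n <-> l + n,
   is an infinite path of the automaton beginning in the initial state 0 *)
Definition infinite_path (b2 : R) (b3 : C) (a b : nat -> bool) : Prop :=
  exists e : nat -> RC,
    e O = RC0 /\
    forall n, inS b2 b3 (e n) /\ inS b2 b3 (e (S n)) /\
              e (S n) = edge_target b2 b3 (e n) (a n) (b n).

(* D^infinity: 0/1 sequences (index n <-> l + n) with no four consecutive 1s *)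
Definition inDinf (eps : nat -> bool) : Prop :=
  forall n, ~ (eps n = true /\ eps (S n) = true /\ eps (S (S n)) = true
               /\ eps (S (S (S n))) = true).

(* the value sum_{i >= l} eps_i alpha^i in R x C (componentwise series;
   the C-component is summed via its real and imaginary parts) *)
Definition alpha_value (b2 : R) (b3 : C) (l : Z) (eps : nat -> bool) : RC :=
  let term := fun n : nat => RCscal (b2Z (eps n)) (alz b2 b3 (l + Z.of_nat n)%Z) in
  (Series (fun n => fst (term n)),
   (Series (fun n => Re (snd (term n))), Series (fun n => Im (snd (term n))))).

(* Main.v *)
Require Import Defs.
From Stdlib Require Import Reals Lra Lia Psatz ZArith List Bool Arith.
From Coquelicot Require Import Coquelicot.
Import ListNotations.
Open Scope R_scope.

Definition r1 := -774804113216 / 1000000000000.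
Definition r2 := -774804113215 / 1000000000000.

Lemma b2_bounds b2 : PR b2 = 0 -> b2 < 0 -> r1 < b2 < r2.
Proof.
  unfold PR, r1, r2; intros H Hn.
  split.
  - destruct (Rlt_or_le r1 b2) as [h|h]; unfold r1 in *; [lra|exfalso].
    set (c := -774804113216 / 1000000000000) in *.
    assert (Hc: c^4 - c^3 - c^2 - c - 1 > 0) by (unfold c; lra).
    assert (E: b2^4 - b2^3 - b2^2 - b2 - 1 - (c^4 - c^3 - c^2 - c - 1) =
      (b2 - c) * (b2^3 + (c - 1)*b2^2 + (c^2 - c - 1)*b2 + (c^3 - c^2 - c - 1))) by ring.
    assert (Q: b2^3 + (c - 1)*b2^2 + (c^2 - c - 1)*b2 + (c^3 - c^2 - c - 1) < 0).
    { assert (c^2 - c - 1 > 0) by (unfold c; lra).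
      assert (c^3 - c^2 - c - 1 < 0) by (unfold c; lra).
      assert (b2^3 <= 0) by nra. assert ((c-1)*b2^2 <= 0) by (unfold c in *; nra).
      assert ((c^2 - c - 1)*b2 <= 0) by nra. lra. }
    nra.
  - destruct (Rlt_or_le b2 r2) as [h|h]; unfold r2 in *; [lra|exfalso].
    set (c := -774804113215 / 1000000000000) in *.
    assert (Hc: c^4 - c^3 - c^2 - c - 1 < 0) by (unfold c; lra).
    assert (E: b2^4 - b2^3 - b2^2 - b2 - 1 - (c^4 - c^3 - c^2 - c - 1) =
      (b2 - c) * (b2^3 + (c - 1)*b2^2 + (c^2 - c - 1)*b2 + (c^3 - c^2 - c - 1))) by ring.
    assert (Q: b2^3 + (c - 1)*b2^2 + (c^2 - c - 1)*b2 + (c^3 - c^2 - c - 1) < 0).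
    { assert (c^2 - c - 1 > 0) by (unfold c; lra).
      assert (c^3 - c^2 - c - 1 < 0) by (unfold c; lra).
      assert (b2^3 <= 0) by nra. assert ((c-1)*b2^2 <= 0) by (unfold c in *; nra).
      assert ((c^2 - c - 1)*b2 <= 0) by nra. lra. }
    nra.
Qed.

Definition s1 := 1927561975482 / 1000000000000.
Definition s2 := 1927561975483 / 1000000000000.

Lemma beta_ex : { s : R | s1 <= s <= s2 /\ PR s = 0 }.
Proof.
  destruct (IVT PR s1 s2) as [z Hz].
  - unfold PR. intro x. reg.
  - unfold s1, s2; lra.
  - unfold PR, s1; lra.
  - unfold PR, s2; lra.
  - exists z; exact Hz.
Qed.

Lemma PC_comp x y : PC (x,y) = 0%C ->
  x^4 - 6*x^2*y^2 + y^4 - (x^3 - 3*x*y^2) - (x^2 - y^2) - x - 1 = 0 /\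
  4*x^3*y - 4*x*y^3 - (3*x^2*y - y^3) - 2*x*y - y = 0.
Proof.
  intro H. unfold PC in H. simpl in H.
  apply (f_equal fst) in H as H1. apply (f_equal snd) in H as H2.
  simpl in H1, H2. split; [rewrite <- H1 | rewrite <- H2]; ring.
Qed.

Lemma b3_facts r s x y : PR r = 0 -> PR s = 0 -> r < 0 -> 0 < s ->
  PC (x,y) = 0%C -> 0 < y ->
  x = (1 - r - s)/2 /\ (x^2+y^2)*(r*s) = -1.
Proof.
  intros Hr Hs Hr0 Hs0 H Hy. destruct (PC_comp x y H) as [E1 E2]. clear H.
  unfold PR in Hr, Hs.
  set (a := r - 1). set (b := r^2 - r - 1). set (c := r^3 - r^2 - r - 1).
  set (p := a + s). set (q := b + s*p). set (Qs := c + s*q).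
  assert (HQ : (s^4 - s^3 - s^2 - s - 1) = (s - r) * Qs + (r^4 - r^3 - r^2 - r - 1))
    by (unfold Qs, q, p, a, b, c; ring).
  assert (HQs : Qs = 0).
  { rewrite Hs, Hr in HQ. assert (s - r <> 0) by lra.
    apply (Rmult_eq_reg_l (s - r)); lra. }
  set (u := x^2 - y^2 + p*x + q). set (w := y*(2*x+p)).
  set (g := (x-r)*(x-s) - y^2). set (h := y*((x-r)+(x-s))).
  assert (F1 : x^4 - 6*x^2*y^2 + y^4 - (x^3 - 3*x*y^2) - (x^2 - y^2) - x - 1
     = g*u - h*w + (x - r)*Qs + (r^4 - r^3 - r^2 - r - 1))
    by (unfold g,u,h,w,Qs,q,p,a,b,c; ring).
  assert (F2 : 4*x^3*y - 4*x*y^3 - (3*x^2*y - y^3) - 2*x*y - y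
     = g*w + h*u + y*Qs)
    by (unfold g,u,h,w,Qs,q,p,a,b,c; ring).
  rewrite HQs, Hr in F1. rewrite HQs in F2. rewrite E1 in F1. rewrite E2 in F2.
  assert (G : g^2 + h^2 = ((x-r)^2+y^2)*((x-s)^2+y^2)) by (unfold g,h; ring).
  assert (Gp : g^2 + h^2 > 0).
  { rewrite G. assert (y^2>0) by (apply pow_lt; lra). assert ((x-r)^2 >= 0) by (apply Rle_ge, pow2_ge_0). assert ((x-s)^2>=0) by (apply Rle_ge, pow2_ge_0). apply Rmult_lt_0_compat; lra. }
  assert (Hu : (g^2+h^2)*u = g*(g*u - h*w) + h*(g*w+h*u)) by ring.
  assert (Hw : (g^2+h^2)*w = g*(g*w+h*u) - h*(g*u - h*w)) by ring.
  assert (Z1 : g*u - h*w = 0) by lra. assert (Z2 : g*w+h*u = 0) by lra.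
  rewrite Z1, Z2 in Hu, Hw.
  assert (u = 0) by (apply (Rmult_eq_reg_l (g^2+h^2)); [rewrite Hu; ring | lra]).
  assert (w = 0) by (apply (Rmult_eq_reg_l (g^2+h^2)); [rewrite Hw; ring | lra]).
  assert (Hx : 2*x + p = 0).
  { unfold w in H0. destruct (Rmult_integral _ _ H0); lra. }
  assert (Hc : c * r = 1) by (unfold c; lra).
  split.
  - unfold p, a in Hx. lra.
  - assert (Hq : q = x^2 + y^2).
    { unfold u in H. assert (p = -2*x) by lra. rewrite H1 in H. lra. }
    rewrite <- Hq. unfold Qs in HQs.
    assert (q*s = -c) by lra. nra.
Qed.

Definition c_xl := (-76378931134000 / 1000000000000000).
Definition c_xh := (-76378931133000 / 1000000000000000).
Definition c_ml := (-1493482947082987 / 1000000000000000).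
Definition c_mh := (-1493482947080284 / 1000000000000000).
Definition c_ql := (669575773833347 / 1000000000000000).
Definition c_qh := (669575773834560 / 1000000000000000).
Definition c_xxl := (5833741121019 / 1000000000000000).
Definition c_xxh := (5833741121173 / 1000000000000000).
Definition c_tl := (663742032712174 / 1000000000000000).
Definition c_th := (663742032713541 / 1000000000000000).
Definition c_x3l := (-445574911348 / 1000000000000000).
Definition c_x3h := (-445574911330 / 1000000000000000).
Definition c_xtl := (-50695907007369 / 1000000000000000).
Definition c_xth := (-50695907006600 / 1000000000000000).
Definition c_rrl := (600321413854882 / 1000000000000000).
Definition c_rrh := (600321413856433 / 1000000000000000).
Definition c_r3l := (-465131500707609 / 1000000000000000).
Definition c_r3h := (-465131500705806 / 1000000000000000).

Lemma mono_bounds r s x y : r1 < r < r2 -> s1 <= s <= s2 -> x = (1 - r - s)/2 ->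
  (x^2+y^2)*(r*s) = -1 ->
  (-774804113216 <= r * 1000000000000 <= -774804113215) /\
  (600321413854 <= r^2 * 1000000000000 <= 600321413857) /\
  (-465131500708 <= r^3 * 1000000000000 <= -465131500705) /\
  (-76378931134 <= x * 1000000000000 <= -76378931133) /\
  (-657908291593 <= (x^2 - y^2) * 1000000000000 <= -657908291591) /\
  (151642146108 <= (x^3 - 3*x*y^2) * 1000000000000 <= 151642146111) /\
  (-152757862268 <= (2*x) * 1000000000000 <= -152757862266) /\
  (-646240809351 <= (3*x^2 - y^2) * 1000000000000 <= -646240809348) /\
  (663742032712 <= y^2 * 1000000000000 <= 663742032714).
Proof.
  unfold r1, r2, s1, s2. intros Hr Hs Hx Hq.
  assert (Hx' : c_xl <= x <= c_xh) by (unfold c_xl, c_xh; lra).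
  assert (Hm : c_ml <= r*s <= c_mh) by (unfold c_ml, c_mh; split; nra).
  assert (Hrs0 : r*s < 0) by (unfold c_mh in Hm; lra).
  assert (Hqp : 0 < x^2+y^2) by nra.
  assert (Hq' : c_ql <= x^2+y^2 <= c_qh) by (unfold c_ql, c_qh, c_ml, c_mh in *; split; nra).
  assert (Hxx : c_xxl <= x^2 <= c_xxh) by (unfold c_xxl, c_xxh, c_xl, c_xh in *; split; nra).
  assert (Ht : c_tl <= y^2 <= c_th) by (unfold c_tl, c_th, c_xxl, c_xxh, c_ql, c_qh in *; split; lra).
  assert (Hx3 : c_x3l <= x^3 <= c_x3h) by (unfold c_x3l, c_x3h, c_xxl, c_xxh, c_xl, c_xh in *; split; nra).
  assert (Hxt : c_xtl <= x*y^2 <= c_xth) by (unfold c_xtl, c_xth, c_tl, c_th, c_xl, c_xh in *; split; nra).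
  assert (Hrr : c_rrl <= r^2 <= c_rrh) by (unfold c_rrl, c_rrh in *; split; nra).
  assert (Hr3 : c_r3l <= r^3 <= c_r3h) by (unfold c_r3l, c_r3h, c_rrl, c_rrh in *; split; nra).
  unfold c_xl, c_xh, c_xxl, c_xxh, c_tl, c_th, c_x3l, c_x3h, c_xtl, c_xth, c_rrl, c_rrh, c_r3l, c_r3h in *.
  repeat split; try lra.
Qed.

Lemma q_bounds r s x y : r1 < r < r2 -> s1 <= s <= s2 -> x = (1 - r - s)/2 ->
  (x^2+y^2)*(r*s) = -1 -> c_ql <= x^2+y^2 <= c_qh.
Proof.
  unfold r1, r2, s1, s2. intros Hr Hs Hx Hq.
  assert (Hm : c_ml <= r*s <= c_mh) by (unfold c_ml, c_mh; split; nra).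
  assert (Hrs0 : r*s < 0) by (unfold c_mh in Hm; lra).
  assert (Hqp : 0 < x^2+y^2) by nra.
  unfold c_ql, c_qh, c_ml, c_mh in *; split; nra.
Qed.

Inductive V4 := mk4 (a b c d : Z).
Definition veqb (v w : V4) : bool :=
  match v, w with mk4 a b c d, mk4 a' b' c' d' =>
    Z.eqb a a' && Z.eqb b b' && Z.eqb c c' && Z.eqb d d' end.
Lemma veqb_eq v w : veqb v w = true -> v = w.
Proof. destruct v, w; simpl. intro H. repeat rewrite andb_true_iff in H.
  destruct H as [[[H1 H2] H3] H4]. apply Z.eqb_eq in H1, H2, H3, H4. subst; reflexivity. Qed.

Definition succv (v : V4) (e : Z) : V4 :=
  match v with mk4 a b c d => mk4 (b - a) (c - a) (d - a) (a + e) end.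
Definition mul_alpha (v : V4) : V4 :=
  match v with mk4 a b c d => mk4 d (a + d) (b + d) (c + d) end.
Definition div_alpha (v : V4) : V4 := succv v 0.
Definition vzero := mk4 0 0 0 0.
Definition vone := mk4 1 0 0 0.
Definition vadd (v w : V4) : V4 :=
  match v, w with mk4 a b c d, mk4 a' b' c' d' => mk4 (a+a') (b+b') (c+c') (d+d') end.
Definition vneg (v : V4) : V4 := match v with mk4 a b c d => mk4 (-a) (-b) (-c) (-d) end.
Definition alpha_pow (k : Z) : V4 :=
  match k with
  | Z0 => vone
  | Zpos p => Nat.iter (Pos.to_nat p) mul_alpha vone
  | Zneg p => Nat.iter (Pos.to_nat p) div_alpha vone
  end.
Definition cvec (c : bool * bool * bool * bool) : V4 :=
  match c with (c0, c1, c2, c3) => mk4 (b2Z c0) (b2Z c1) (b2Z c2) (b2Z c3) end.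
Definition kvec (ks : list Z) : V4 := fold_right (fun k acc => vadd (alpha_pow k) acc) vzero ks.

Definition bools := [false; true].
Definition all16 : list (bool*bool*bool*bool) :=
  flat_map (fun c0 => flat_map (fun c1 => flat_map (fun c2 => map (fun c3 => (c0,c1,c2,c3)) bools) bools) bools) bools.
Definition not1111 (c : bool*bool*bool*bool) : bool :=
  match c with (true,true,true,true) => false | _ => true end.
Definition clist := filter not1111 all16.
Definition klist : list (list Z) := [[-1;0;2]; [-2;-1;1]; [-3;-2;0;3]]%Z.
Definition Svec : list V4 :=
  map cvec clist ++ map (fun c => vneg (cvec c)) clist ++ map kvec klist ++ map (fun k => vneg (kvec k)) klist.
Definition inSv (v : V4) : bool := existsb (veqb v) Svec.

Definition Dz : Z := 1000000000000.
Definition tl (w : Z) (I : Z * Z) : Z := if Z.leb 0 w then w * fst I else w * snd I.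
Definition th (w : Z) (I : Z * Z) : Z := if Z.leb 0 w then w * snd I else w * fst I.
Definition IR1 : Z*Z := (-774804113216, -774804113215)%Z.
Definition IR2 : Z*Z := (600321413854, 600321413857)%Z.
Definition IR3 : Z*Z := (-465131500708, -465131500705)%Z.
Definition IX1 : Z*Z := (-76378931134, -76378931133)%Z.
Definition IX2 : Z*Z := (-657908291593, -657908291591)%Z.
Definition IX3 : Z*Z := (151642146108, 151642146111)%Z.
Definition IN1 : Z*Z := (-152757862268, -152757862266)%Z.
Definition IN2 : Z*Z := (-646240809351, -646240809348)%Z.
Definition IT : Z*Z := (663742032712, 663742032714)%Z.
Definition K2D : Z := 1600321413865.
Definition K3D : Z := 6086600879099337715362959135052796094.
Definition sqlow (lo hi : Z) : Z := if Z.ltb 0 lo then lo * lo else if Z.ltb hi 0 then hi * hi else 0.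

Definition viol2 (v : V4) : bool :=
  match v with mk4 a b c d =>
    Z.ltb K2D (a * Dz + tl b IR1 + tl c IR2 + tl d IR3) ||
    Z.ltb (a * Dz + th b IR1 + th c IR2 + th d IR3) (- K2D) end.
Definition viol3 (v : V4) : bool :=
  match v with mk4 a b c d =>
    Z.ltb K3D (sqlow (a * Dz + tl b IX1 + tl c IX2 + tl d IX3) (a * Dz + th b IX1 + th c IX2 + th d IX3) * Dz
               + fst IT * sqlow (b * Dz + tl c IN1 + tl d IN2) (b * Dz + th c IN1 + th d IN2)) end.
Definition bad (v : V4) : bool :=
  veqb v (mk4 1 1 1 1) || veqb v (mk4 (-1) (-1) (-1) (-1)) || viol2 v || viol3 v.
Fixpoint dies (k : nat) (v : V4) : bool :=
  if bad v then true else match k with O => false | S k' =>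
    if dies k' (succv v (-1)) then (if dies k' (succv v 0) then dies k' (succv v 1) else false) else false end.
Definition allok : bool :=
  forallb (fun s => forallb (fun d => if inSv (succv s d) then true else dies 8 (succv s d)) [(-1)%Z; 0%Z; 1%Z]) Svec.
Lemma allok_true : allok = true.
Proof. vm_compute. reflexivity. Qed.
Lemma zero_inSv : inSv vzero = true.
Proof. vm_compute. reflexivity. Qed.

Definition phiR (r : R) (v : V4) : R :=
  match v with mk4 a b c d => IZR a + IZR b * r + IZR c * r^2 + IZR d * r^3 end.
Definition phiC (z : C) (v : V4) : C :=
  match v with mk4 a b c d =>
    (RtoC (IZR a) + RtoC (IZR b) * z + RtoC (IZR c) * Cpow z 2 + RtoC (IZR d) * Cpow z 3)%C end.

Lemma tl_sound (w L U : Z) (m : R) : IZR L <= m * IZR Dz <= IZR U ->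
  IZR (tl w (L, U)) <= IZR w * m * IZR Dz.
Proof.
  intros [H1 H2]. unfold tl; simpl. destruct (Z.leb_spec 0 w) as [h|h];
  rewrite mult_IZR; apply IZR_le in h || apply IZR_lt in h; nra.
Qed.
Lemma th_sound (w L U : Z) (m : R) : IZR L <= m * IZR Dz <= IZR U ->
  IZR w * m * IZR Dz <= IZR (th w (L, U)).
Proof.
  intros [H1 H2]. unfold th; simpl. destruct (Z.leb_spec 0 w) as [h|h];
  rewrite mult_IZR; apply IZR_le in h || apply IZR_lt in h; nra.
Qed.
Lemma sqlow_sound (lo hi : Z) (X : R) : IZR lo <= X <= IZR hi -> IZR (sqlow lo hi) <= X^2.
Proof.
  intros [H1 H2]. unfold sqlow. destruct (Z.ltb_spec 0 lo) as [h|h].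
  - rewrite mult_IZR. apply IZR_lt in h. nra.
  - destruct (Z.ltb_spec hi 0) as [h'|h'].
    + rewrite mult_IZR. apply IZR_lt in h'. nra.
    + simpl. nra.
Qed.

Definition IntOK (I : Z * Z) (m : R) : Prop := IZR (fst I) <= m * IZR Dz <= IZR (snd I).

Lemma lin3_sound a b c d (I1 I2 I3 : Z*Z) m1 m2 m3 :
  IntOK I1 m1 -> IntOK I2 m2 -> IntOK I3 m3 ->
  IZR (a * Dz + tl b I1 + tl c I2 + tl d I3) <= (IZR a + IZR b * m1 + IZR c * m2 + IZR d * m3) * IZR Dz
  <= IZR (a * Dz + th b I1 + th c I2 + th d I3).
Proof.
  destruct I1 as [L1 U1], I2 as [L2 U2], I3 as [L3 U3]. unfold IntOK; simpl.
  intros H1 H2 H3.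
  pose proof (tl_sound b _ _ _ H1). pose proof (tl_sound c _ _ _ H2). pose proof (tl_sound d _ _ _ H3).
  pose proof (th_sound b _ _ _ H1). pose proof (th_sound c _ _ _ H2). pose proof (th_sound d _ _ _ H3).
  rewrite !plus_IZR, !mult_IZR. split; nra.
Qed.
Lemma lin2_sound b c d (I2 I3 : Z*Z) m2 m3 :
  IntOK I2 m2 -> IntOK I3 m3 ->
  IZR (b * Dz + tl c I2 + tl d I3) <= (IZR b + IZR c * m2 + IZR d * m3) * IZR Dz
  <= IZR (b * Dz + th c I2 + th d I3).
Proof.
  destruct I2 as [L2 U2], I3 as [L3 U3]. unfold IntOK; simpl.
  intros H2 H3.
  pose proof (tl_sound c _ _ _ H2). pose proof (tl_sound d _ _ _ H3).
  pose proof (th_sound c _ _ _ H2). pose proof (th_sound d _ _ _ H3).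
  rewrite !plus_IZR, !mult_IZR. split; nra.
Qed.

Lemma viol2_sound v r : IntOK IR1 r -> IntOK IR2 (r^2) -> IntOK IR3 (r^3) ->
  viol2 v = true -> IZR K2D < Rabs (phiR r v) * IZR Dz.
Proof.
  intros H1 H2 H3. destruct v as [a b c d]. unfold viol2, phiR.
  pose proof (lin3_sound a b c d _ _ _ _ _ _ H1 H2 H3) as [L U].
  assert (HD : 0 < IZR Dz) by (unfold Dz; lra).
  rewrite orb_true_iff, !Z.ltb_lt. intros [h|h]; apply IZR_lt in h; rewrite ?opp_IZR in h.
  - unfold Rabs; destruct Rcase_abs; nra.
  - unfold Rabs; destruct Rcase_abs; nra.
Qed.

Lemma phiC_comp x y v : match v with mk4 a b c d =>
  Re (phiC (x,y) v) = IZR a + IZR b * x + IZR c * (x^2 - y^2) + IZR d * (x^3 - 3*x*y^2) /\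
  Im (phiC (x,y) v) = y * (IZR b + IZR c * (2*x) + IZR d * (3*x^2 - y^2)) end.
Proof. destruct v as [a b c d]; simpl; split; ring. Qed.

Lemma viol3_sound v x y : IntOK IX1 x -> IntOK IX2 (x^2 - y^2) -> IntOK IX3 (x^3 - 3*x*y^2) ->
  IntOK IN1 (2*x) -> IntOK IN2 (3*x^2 - y^2) -> IntOK IT (y^2) ->
  viol3 v = true -> IZR K3D < (Re (phiC (x,y) v) ^2 + Im (phiC (x,y) v) ^ 2) * IZR Dz ^ 3.
Proof.
  intros H1 H2 H3 H4 H5 H6. pose proof (phiC_comp x y v) as Hc.
  destruct v as [a b c d]. destruct Hc as [-> ->]. unfold viol3.
  pose proof (lin3_sound a b c d _ _ _ _ _ _ H1 H2 H3) as HA.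
  pose proof (lin2_sound b c d _ _ _ _ H4 H5) as HC.
  apply sqlow_sound in HA. apply sqlow_sound in HC.
  set (A := IZR a + IZR b * x + IZR c * (x ^ 2 - y ^ 2) + IZR d * (x ^ 3 - 3 * x * y ^ 2)) in *.
  set (Cc := IZR b + IZR c * (2 * x) + IZR d * (3 * x ^ 2 - y ^ 2)) in *.
  unfold IntOK in H6; simpl in H6.
  rewrite Z.ltb_lt. intro h. apply IZR_lt in h. rewrite plus_IZR, !mult_IZR in h.
  assert (HD : IZR Dz = 1000000000000) by (unfold Dz; reflexivity).
  rewrite HD in *. simpl in h.
  clearbody A Cc.
  assert (0 <= IZR (sqlow (b * Dz + tl c IN1 + tl d IN2) (b * Dz + th c IN1 + th d IN2))).
  { unfold sqlow. destruct Z.ltb; [apply IZR_le, Z.square_nonneg|]. destruct Z.ltb; [apply IZR_le, Z.square_nonneg| lra]. }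
  set (S1 := IZR (sqlow (a * Dz + tl b IX1 + tl c IX2 + tl d IX3) (a * Dz + th b IX1 + th c IX2 + th d IX3))) in *.
  set (S2 := IZR (sqlow (b * Dz + tl c IN1 + tl d IN2) (b * Dz + th c IN1 + th d IN2))) in *.
  clearbody S1 S2.
  nra.
Qed.

Lemma phiR_succ r v e : PR r = 0 -> phiR r (succv v e) * r = phiR r v + IZR e * r^4.
Proof.
  unfold PR; intro H. destruct v as [a b c d]; simpl.
  rewrite !minus_IZR, !plus_IZR.
  replace (IZR a + IZR b * r + IZR c * (r * (r * 1)) + IZR d * (r * (r * (r * 1))) + IZR e * (r * (r * (r * (r * 1)))))
    with ((IZR b - IZR a + (IZR c - IZR a) * r + (IZR d - IZR a) * (r * (r * 1)) + (IZR a + IZR e) * (r * (r * (r * 1)))) * r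
     - IZR a * (r ^ 4 - r ^ 3 - r ^ 2 - r - 1)) by ring.
  rewrite H; ring.
Qed.

Lemma phiC_succ z v e : PC z = 0%C -> (phiC z (succv v e) * z = phiC z v + RtoC (IZR e) * Cpow z 4)%C.
Proof.
  unfold PC; intro H. destruct v as [a b c d]; unfold phiC, succv.
  rewrite !minus_IZR, !plus_IZR, !RtoC_minus, !RtoC_plus.
  transitivity (RtoC (IZR a) + RtoC (IZR b) * z + RtoC (IZR c) * Cpow z 2 + RtoC (IZR d) * Cpow z 3 + RtoC (IZR e) * Cpow z 4
     + RtoC (IZR a) * (Cpow z 4 - Cpow z 3 - Cpow z 2 - z - 1))%C.
  - simpl. ring.
  - rewrite H. ring.
Qed.

Lemma phiR_mul r v : PR r = 0 -> phiR r (mul_alpha v) = r * phiR r v.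
Proof.
  unfold PR; intro H. destruct v as [a b c d]; simpl. rewrite !plus_IZR.
  replace (r * (IZR a + IZR b * r + IZR c * (r * (r * 1)) + IZR d * (r * (r * (r * 1)))))
    with (IZR d + (IZR a + IZR d) * r + (IZR b + IZR d) * (r * (r * 1)) + (IZR c + IZR d) * (r * (r * (r * 1)))
      + IZR d * (r ^ 4 - r ^ 3 - r ^ 2 - r - 1)) by ring.
  rewrite H; ring.
Qed.

Lemma phiC_mul z v : PC z = 0%C -> phiC z (mul_alpha v) = (z * phiC z v)%C.
Proof.
  unfold PC; intro H. destruct v as [a b c d]; unfold phiC, mul_alpha.
  rewrite !plus_IZR, !RtoC_plus.
  transitivity (z * (RtoC (IZR a) + RtoC (IZR b) * z + RtoC (IZR c) * Cpow z 2 + RtoC (IZR d) * Cpow z 3)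
     - RtoC (IZR d) * (Cpow z 4 - Cpow z 3 - Cpow z 2 - z - 1))%C.
  - simpl. ring.
  - rewrite H. ring.
Qed.

Lemma phiR_div r v : PR r = 0 -> r <> 0 -> phiR r (div_alpha v) = phiR r v / r.
Proof.
  intros H Hr. unfold div_alpha. pose proof (phiR_succ r v 0 H) as E.
  rewrite Rmult_0_l, Rplus_0_r in E. rewrite <- E. field. exact Hr.
Qed.

Lemma phiC_div z v : PC z = 0%C -> z <> 0%C -> phiC z (div_alpha v) = (phiC z v / z)%C.
Proof.
  intros H Hz. unfold div_alpha. pose proof (phiC_succ z v 0 H) as E.
  replace (phiC z v) with (phiC z v + RtoC (IZR 0) * Cpow z 4)%C by (simpl; ring).
  rewrite <- E. field. exact Hz.
Qed.

Lemma phiR_one r : phiR r vone = 1.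
Proof. simpl; ring. Qed.
Lemma phiC_one z : phiC z vone = 1%C.
Proof. unfold phiC, vone. simpl. ring. Qed.

Lemma phiR_pow r k : PR r = 0 -> r <> 0 -> phiR r (alpha_pow k) = powerRZ r k.
Proof.
  intros H Hr. destruct k as [|p|p]; simpl.
  - ring.
  - induction (Pos.to_nat p) as [|n IH]; simpl.
    + ring.
    + rewrite phiR_mul by exact H. rewrite IH. ring.
  - induction (Pos.to_nat p) as [|n IH]; simpl.
    + field.
    + rewrite phiR_div by assumption. rewrite IH. field. split; [|exact Hr]. apply pow_nonzero; exact Hr.
Qed.

Lemma phiC_pow z k : PC z = 0%C -> z <> 0%C -> phiC z (alpha_pow k) = zpowC z k.
Proof.
  intros H Hz. destruct k as [|p|p]; unfold alpha_pow, zpowC.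
  - apply phiC_one.
  - induction (Pos.to_nat p) as [|n IH]; simpl Nat.iter; simpl Cpow.
    + apply phiC_one.
    + rewrite phiC_mul by exact H. rewrite IH. reflexivity.
  - induction (Pos.to_nat p) as [|n IH]; simpl Nat.iter; simpl Cpow.
    + apply phiC_one.
    + rewrite phiC_div by assumption. rewrite IH. field. exact Hz.
Qed.

Definition PHI (b2 : R) (b3 : C) (v : V4) : RC := (phiR b2 v, phiC b3 v).

Lemma PHI_zero b2 b3 : PHI b2 b3 vzero = RC0.
Proof. unfold PHI, RC0; simpl; f_equal; [ring|]. unfold phiC. ring. Qed.

Lemma PHI_add b2 b3 v w : PHI b2 b3 (vadd v w) = RCadd (PHI b2 b3 v) (PHI b2 b3 w).
Proof.
  destruct v as [a b c d], w as [a' b' c' d']. unfold PHI, RCadd; simpl.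
  rewrite !plus_IZR. f_equal; [ring|]. unfold phiC. rewrite !RtoC_plus. ring.
Qed.

Lemma PHI_neg b2 b3 v : PHI b2 b3 (vneg v) = RCopp (PHI b2 b3 v).
Proof.
  destruct v as [a b c d]. unfold PHI, RCopp; simpl.
  rewrite !opp_IZR. f_equal; [ring|]. unfold phiC. rewrite !RtoC_opp. ring.
Qed.

Lemma PHI_kvec b2 b3 ks : PR b2 = 0 -> b2 <> 0 -> PC b3 = 0%C -> b3 <> 0%C ->
  PHI b2 b3 (kvec ks) = alsum b2 b3 ks.
Proof.
  intros H2 H2' H3 H3'. induction ks as [|k ks IH]; simpl.
  - apply PHI_zero.
  - rewrite PHI_add, IH. f_equal. unfold PHI, alz. rewrite phiR_pow, phiC_pow by assumption. reflexivity.
Qed.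

Lemma PHI_cvec b2 b3 c0 c1 c2 c3 : PHI b2 b3 (cvec (c0,c1,c2,c3)) =
  RCadd (RCscal (b2Z c0) (alz b2 b3 0))
   (RCadd (RCscal (b2Z c1) (alz b2 b3 1))
   (RCadd (RCscal (b2Z c2) (alz b2 b3 2))
          (RCscal (b2Z c3) (alz b2 b3 3)))).
Proof.
  unfold PHI, RCadd, RCscal, alz, cvec, phiR, phiC. simpl. f_equal; ring.
Qed.

Lemma clist_spec c : In c clist -> ~ (fst (fst (fst c)) = true /\ snd (fst (fst c)) = true /\ snd (fst c) = true /\ snd c = true).
Proof.
  unfold clist. rewrite filter_In. intros [_ H]. destruct c as [[[c0 c1] c2] c3]; simpl.
  intros [-> [-> [-> ->]]]. simpl in H. discriminate.
Qed.

Lemma Svec_inS b2 b3 v : PR b2 = 0 -> b2 <> 0 -> PC b3 = 0%C -> b3 <> 0%C ->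
  In v Svec -> inS b2 b3 (PHI b2 b3 v).
Proof.
  intros H2 H2' H3 H3' Hin. unfold Svec in Hin. rewrite !in_app_iff in Hin.
  destruct Hin as [Hin|[Hin|[Hin|Hin]]]; apply in_map_iff in Hin; destruct Hin as [c [<- Hc]].
  - left. destruct c as [[[c0 c1] c2] c3]. exists c0, c1, c2, c3. split.
    + exact (clist_spec _ Hc).
    + left. apply PHI_cvec.
  - left. destruct c as [[[c0 c1] c2] c3]. exists c0, c1, c2, c3. split.
    + exact (clist_spec _ Hc).
    + right. rewrite PHI_neg. f_equal. apply PHI_cvec.
  - right. exists c. split.
    + simpl in Hc. destruct Hc as [<-|[<-|[<-|[]]]]; auto.
    + left. apply PHI_kvec; assumption.
  - right. exists c. split.
    + simpl in Hc. destruct Hc as [<-|[<-|[<-|[]]]]; auto.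
    + right. rewrite PHI_neg. f_equal. apply PHI_kvec; assumption.
Qed.

Lemma inSv_In v : inSv v = true -> In v Svec.
Proof.
  unfold inSv. rewrite existsb_exists. intros [w [Hw E]]. apply veqb_eq in E. subst; exact Hw.
Qed.

Definition dd (eps eps' : nat -> bool) (n : nat) : Z := (b2Z (eps n) - b2Z (eps' n))%Z.
Fixpoint vseq (eps eps' : nat -> bool) (n : nat) : V4 := match n with O => vzero | S m => succv (vseq eps eps' m) (dd eps eps' m) end.
Fixpoint PSR (eps eps' : nat -> bool) (r : R) (n : nat) : R := match n with O => 0 | S m => PSR eps eps' r m + IZR (dd eps eps' m) * r^m end.
Fixpoint PSC (eps eps' : nat -> bool) (z : C) (n : nat) : C := match n with O => 0%C | S m => (PSC eps eps' z m + RtoC (IZR (dd eps eps' m)) * Cpow z m)%C end.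

Lemma dd_range eps eps' n : dd eps eps' n = (-1)%Z \/ dd eps eps' n = 0%Z \/ dd eps eps' n = 1%Z.
Proof. unfold dd. destruct (eps n), (eps' n); simpl; auto. Qed.

Lemma vseq_R eps eps' r n : PR r = 0 -> phiR r (vseq eps eps' n) * r^n = r^4 * PSR eps eps' r n.
Proof.
  intro H. induction n as [|n IH]; simpl.
  - ring.
  - replace (phiR r (succv (vseq eps eps' n) (dd eps eps' n)) * (r * r ^ n)) with ((phiR r (succv (vseq eps eps' n) (dd eps eps' n)) * r) * r^n) by ring.
    rewrite phiR_succ by exact H. rewrite Rmult_plus_distr_r, IH. ring.
Qed.

Lemma vseq_C eps eps' z n : PC z = 0%C -> (phiC z (vseq eps eps' n) * Cpow z n = Cpow z 4 * PSC eps eps' z n)%C.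
Proof.
  intro H. induction n as [|n IH]; simpl vseq; simpl PSC.
  - unfold phiC, vzero. simpl. ring.
  - replace (phiC z (succv (vseq eps eps' n) (dd eps eps' n)) * Cpow z (S n))%C with ((phiC z (succv (vseq eps eps' n) (dd eps eps' n)) * z) * Cpow z n)%C by (simpl; ring).
    rewrite phiC_succ by exact H.
    replace ((phiC z (vseq eps eps' n) + RtoC (IZR (dd eps eps' n)) * Cpow z 4) * Cpow z n)%C
      with (phiC z (vseq eps eps' n) * Cpow z n + RtoC (IZR (dd eps eps' n)) * Cpow z 4 * Cpow z n)%C by ring.
    rewrite IH. ring.
Qed.

Lemma dies_sound eps eps' : (forall m, bad (vseq eps eps' m) = false) -> forall k m, dies k (vseq eps eps' m) = true -> False.
Proof.
  intros Hb k. induction k as [|k IH]; intros m H; simpl in H; rewrite Hb in H.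
  - discriminate.
  - apply (IH (S m)). simpl.
    destruct (dies k (succv (vseq eps eps' m) (-1))) eqn:E1; [|discriminate].
    destruct (dies k (succv (vseq eps eps' m) 0)) eqn:E2; [|discriminate].
    destruct (dd_range eps eps' m) as [h|[h|h]]; rewrite h; auto.
Qed.

Lemma vseq_in eps eps' : (forall m, bad (vseq eps eps' m) = false) -> forall n, In (vseq eps eps' n) Svec.
Proof.
  intros Hb n. induction n as [|n IH].
  - apply inSv_In. apply zero_inSv.
  - pose proof allok_true as A. unfold allok in A. rewrite forallb_forall in A.
    specialize (A _ IH). rewrite forallb_forall in A.
    assert (Hd : In (dd eps eps' n) [(-1)%Z; 0%Z; 1%Z]) by (destruct (dd_range eps eps' n) as [h|[h|h]]; rewrite h; simpl; auto).
    specialize (A _ Hd). change (In (succv (vseq eps eps' n) (dd eps eps' n)) Svec).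
    destruct (inSv (succv (vseq eps eps' n) (dd eps eps' n))) eqn:E.
    + apply inSv_In; exact E.
    + exfalso. apply (dies_sound eps eps' Hb 8 (S n)). change (dies 8 (succv (vseq eps eps' n) (dd eps eps' n)) = true). exact A.
Qed.

Fixpoint Asum (be : R) (eps : nat -> bool) (n : nat) : R :=
  match n with O => 0 | S m => Asum be eps m + IZR (b2Z (eps m)) * be^m end.

Lemma Asum_nonneg be eps n : 0 <= be -> 0 <= Asum be eps n.
Proof.
  intro H. induction n as [|n IH]; simpl. lra.
  assert (0 <= be^n) by (apply pow_le; lra).
  destruct (eps n); simpl; nra.
Qed.

Lemma Asum_lt be eps : 19/10 <= be -> be^4 = be^3 + be^2 + be + 1 -> inDinf eps ->
  forall n, Asum be eps n < be^n.
Proof.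
  intros Hb H4 Hd n. induction n as [n IH] using (well_founded_induction lt_wf).
  assert (B2 : be^2 >= be + 1) by nra.
  assert (B3 : be^3 >= be^2 + be + 1) by nra.
  destruct n as [|m]; simpl. lra.
  assert (Hm : 0 < be^m) by (apply pow_lt; lra).
  destruct (eps m) eqn:Em; simpl b2Z.
  2: { specialize (IH m (Nat.lt_succ_diag_r m)). nra. }
  destruct m as [|p]; simpl. lra.
  assert (Hp : 0 < be^p) by (apply pow_lt; lra).
  destruct (eps p) eqn:Ep; simpl b2Z.
  2: { specialize (IH p ltac:(lia)). simpl in Hm. nra. }
  destruct p as [|q]; simpl. nra.
  assert (Hq : 0 < be^q) by (apply pow_lt; lra).
  destruct (eps q) eqn:Eq; simpl b2Z.
  2: { specialize (IH q ltac:(lia)). simpl in Hm, Hp. nra. }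
  destruct q as [|r]; simpl. nra.
  assert (Hr : 0 < be^r) by (apply pow_lt; lra).
  destruct (eps r) eqn:Er.
  { exfalso. apply (Hd r). repeat split; assumption. }
  simpl b2Z. specialize (IH r ltac:(lia)). simpl in Hm, Hp, Hq.
  assert (E : be * (be * (be * (be * be ^ r))) = be^r * be^4) by ring.
  rewrite E, H4. nra.
Qed.

Fixpoint PSg (eps eps' : nat -> bool) (g : nat -> R) (n : nat) : R :=
  match n with O => 0 | S m => PSg eps eps' g m + IZR (dd eps eps' m) * g m end.

Lemma ex_series_eg (eps : nat -> bool) (g : nat -> R) K rho :
  0 <= rho < 1 -> (forall n, Rabs (g n) <= K * rho^n) ->
  ex_series (fun n => IZR (b2Z (eps n)) * g n).
Proof.
  intros Hr Hg. apply (@ex_series_le R_AbsRing R_CompleteNormedModule _ (fun n => K * rho^n)).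
  - intro n. change (norm (IZR (b2Z (eps n)) * g n)) with (Rabs (IZR (b2Z (eps n)) * g n)).
    rewrite Rabs_mult. specialize (Hg n). assert (0 <= Rabs (g n)) by apply Rabs_pos.
    destruct (eps n); simpl; rewrite ?Rabs_R1, ?Rabs_R0; lra.
  - apply (ex_series_ext (fun n => scal K (rho^n))). intro n; reflexivity.
    apply (@ex_series_scal_l R_AbsRing R_NormedModule). apply ex_series_geom. rewrite Rabs_pos_eq; lra.
Qed.

Lemma series_diff eps eps' g K rho : 0 <= rho < 1 -> (forall n, Rabs (g n) <= K * rho^n) ->
  is_lim_seq (PSg eps eps' g)
    (Series (fun n => IZR (b2Z (eps n)) * g n) - Series (fun n => IZR (b2Z (eps' n)) * g n)).
Proof.
  intros Hr Hg.
  pose proof (Series_correct _ (ex_series_eg eps g K rho Hr Hg)) as H1.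
  pose proof (Series_correct _ (ex_series_eg eps' g K rho Hr Hg)) as H2.
  assert (L1 : is_lim_seq (sum_n (fun n => IZR (b2Z (eps n)) * g n)) (Series (fun n => IZR (b2Z (eps n)) * g n))) by exact H1.
  assert (L2 : is_lim_seq (sum_n (fun n => IZR (b2Z (eps' n)) * g n)) (Series (fun n => IZR (b2Z (eps' n)) * g n))) by exact H2.
  pose proof (is_lim_seq_minus' _ _ _ _ L1 L2) as L.
  apply is_lim_seq_incr_1.
  eapply is_lim_seq_ext; [|exact L].
  intro n. simpl. induction n as [|n IH].
  - rewrite !sum_O. unfold dd. rewrite minus_IZR. simpl. ring.
  - rewrite !sum_Sn. change plus with Rplus. simpl in IH |- *. rewrite <- IH. unfold dd. rewrite minus_IZR. ring.
Qed.

Lemma zpowC_nat (z : C) m : zpowC z (Z.of_nat m) = Cpow z m.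
Proof. destruct m as [|m]; simpl. reflexivity. rewrite SuccNat2Pos.id_succ. reflexivity. Qed.
Lemma zpowC_negnat (z : C) m : zpowC z (- Z.of_nat m) = Cpow (/ z) m.
Proof. destruct m as [|m]; simpl. reflexivity. rewrite SuccNat2Pos.id_succ. reflexivity. Qed.

Lemma zpowC_succ (z : C) k : z <> 0%C -> zpowC z (k + 1) = (zpowC z k * z)%C.
Proof.
  intro Hz. destruct (Z_le_gt_dec 0 k) as [h|h].
  - destruct (Z_of_nat_complete k h) as [m ->].
    replace (Z.of_nat m + 1)%Z with (Z.of_nat (S m)) by lia.
    rewrite !zpowC_nat. simpl. ring.
  - assert (exists m, k = (- Z.of_nat (S m))%Z) as [m ->].
    { exists (Z.to_nat (- k) - 1)%nat. lia. }
    replace (- Z.of_nat (S m) + 1)%Z with (- Z.of_nat m)%Z by lia.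
    rewrite !zpowC_negnat. simpl. field. exact Hz.
Qed.

Lemma zpowC_shift (z : C) l n : z <> 0%C -> zpowC z (l + Z.of_nat n) = (zpowC z l * Cpow z n)%C.
Proof.
  intro Hz. induction n as [|n IH].
  - simpl. rewrite Z.add_0_r. ring.
  - replace (l + Z.of_nat (S n))%Z with ((l + Z.of_nat n) + 1)%Z by lia.
    rewrite zpowC_succ, IH by exact Hz. simpl. ring.
Qed.

Lemma zpowC_nz (z : C) l : z <> 0%C -> zpowC z l <> 0%C.
Proof.
  intros Hz H. assert (E := zpowC_shift z l (Z.to_nat (- l)) Hz).
  destruct (Z_le_gt_dec 0 l) as [h|h].
  - destruct (Z_of_nat_complete l h) as [m ->]. rewrite zpowC_nat in H.
    apply (f_equal Cmod) in H. rewrite Cmod_pow, Cmod_0 in H.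
    apply (pow_nonzero (Cmod z) m); [|exact H].
    intro H'. apply Hz. apply Cmod_eq_0. exact H'.
  - rewrite H in E. replace (l + Z.of_nat (Z.to_nat (- l)))%Z with 0%Z in E by lia.
    simpl in E. rewrite Cmult_0_l in E. apply (f_equal fst) in E. simpl in E. lra.
Qed.

Lemma powerRZ_shift r l n : r <> 0 -> powerRZ r (l + Z.of_nat n) = powerRZ r l * r^n.
Proof. intro Hr. rewrite powerRZ_add by exact Hr. rewrite <- pow_powerRZ. reflexivity. Qed.

Lemma lim_bound (x B : R) (u : nat -> R) n : is_lim_seq u 0 -> (forall j, x <= B + u (n + j)%nat) -> x <= B.
Proof.
  intros Hu Hx. destruct (Rle_or_lt x B) as [h|h]; [exact h|exfalso].
  apply is_lim_seq_spec in Hu. assert (He : 0 < (x - B)/2) by lra.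
  destruct (Hu (mkposreal _ He)) as [N HN]. simpl in HN.
  specialize (HN (n + N)%nat ltac:(lia)). specialize (Hx N).
  rewrite Rminus_0_r in HN. apply Rabs_lt_between in HN. lra.
Qed.

Lemma tailR (P : nat -> R) rho : 0 <= rho < 1 -> (forall k, Rabs (P (S k) - P k) <= rho^k) ->
  forall n j, Rabs (P (n + j)%nat - P n) <= (rho^n - rho^(n+j)) / (1 - rho).
Proof.
  intros Hr HP n j. induction j as [|j IH].
  - rewrite Nat.add_0_r, Rminus_diag, Rabs_R0. unfold Rdiv. rewrite Rminus_diag, Rmult_0_l. lra.
  - replace (n + S j)%nat with (S (n + j)) by lia.
    replace (P (S (n + j)) - P n) with ((P (S (n+j)) - P (n+j)%nat) + (P (n+j)%nat - P n)) by ring.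
    eapply Rle_trans; [apply Rabs_triang|].
    specialize (HP (n + j)%nat).
    replace ((rho ^ n - rho ^ S (n + j)) / (1 - rho)) with (rho^(n+j) + (rho ^ n - rho ^ (n + j)) / (1 - rho)).
    + lra.
    + simpl. field. lra.
Qed.

Lemma boundR (P : nat -> R) rho : 0 <= rho < 1 -> (forall k, Rabs (P (S k) - P k) <= rho^k) ->
  is_lim_seq (fun m => Rabs (P m)) 0 -> forall n, Rabs (P n) <= rho^n / (1 - rho).
Proof.
  intros Hr HP Hl n. apply (lim_bound _ _ _ n Hl). intro j.
  pose proof (tailR P rho Hr HP n j) as T.
  assert (0 <= rho^(n+j)) by (apply pow_le; lra).
  replace (P n) with (P (n+j)%nat - (P (n+j)%nat - P n)) by ring.
  eapply Rle_trans; [apply Rabs_triang|]. rewrite Rabs_Ropp.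
  assert ((rho ^ n - rho ^ (n + j)) / (1 - rho) <= rho^n / (1 - rho)).
  { unfold Rdiv. apply Rmult_le_compat_r. apply Rlt_le, Rinv_0_lt_compat; lra. lra. }
  lra.
Qed.

Lemma tailC (P : nat -> C) rho : 0 <= rho < 1 -> (forall k, Cmod (P (S k) - P k)%C <= rho^k) ->
  forall n j, Cmod (P (n + j)%nat - P n)%C <= (rho^n - rho^(n+j)) / (1 - rho).
Proof.
  intros Hr HP n j. induction j as [|j IH].
  - rewrite Nat.add_0_r. replace (P n - P n)%C with (RtoC 0) by ring. rewrite Cmod_0.
    unfold Rdiv. rewrite Rminus_diag, Rmult_0_l. lra.
  - replace (n + S j)%nat with (S (n + j)) by lia.
    replace (P (S (n + j)) - P n)%C with ((P (S (n+j)) - P (n+j)%nat) + (P (n+j)%nat - P n))%C by ring.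
    eapply Rle_trans; [apply Cmod_triangle|].
    specialize (HP (n + j)%nat).
    replace ((rho ^ n - rho ^ S (n + j)) / (1 - rho)) with (rho^(n+j) + (rho ^ n - rho ^ (n + j)) / (1 - rho)).
    + lra.
    + simpl. field. lra.
Qed.

Lemma boundC (P : nat -> C) rho : 0 <= rho < 1 -> (forall k, Cmod (P (S k) - P k)%C <= rho^k) ->
  is_lim_seq (fun m => Cmod (P m)) 0 -> forall n, Cmod (P n) <= rho^n / (1 - rho).
Proof.
  intros Hr HP Hl n. apply (lim_bound _ _ _ n Hl). intro j.
  pose proof (tailC P rho Hr HP n j) as T.
  assert (0 <= rho^(n+j)) by (apply pow_le; lra).
  replace (P n) with (P (n+j)%nat - (P (n+j)%nat - P n))%C by ring.
  eapply Rle_trans; [apply Cmod_triangle|]. rewrite Cmod_opp.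
  assert ((rho ^ n - rho ^ (n + j)) / (1 - rho) <= rho^n / (1 - rho)).
  { unfold Rdiv. apply Rmult_le_compat_r. apply Rlt_le, Rinv_0_lt_compat; lra. lra. }
  lra.
Qed.

Lemma Re_scal a w : Re (RtoC a * w)%C = a * Re w.
Proof. destruct w; simpl; ring. Qed.
Lemma Im_scal a w : Im (RtoC a * w)%C = a * Im w.
Proof. destruct w; simpl; ring. Qed.

Lemma im_le_Cmod (z : C) : Rabs (Im z) <= Cmod z.
Proof.
  assert (H := Cmod2_alt z). assert (0 <= Cmod z) by apply Cmod_ge_0.
  assert (0 <= Rabs (Im z)) by apply Rabs_pos.
  assert (Im z ^ 2 = Rabs (Im z) ^ 2) by (rewrite pow2_abs; reflexivity).
  assert (0 <= Re z ^ 2) by apply pow2_ge_0.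
  nra.
Qed.

Lemma Cmod_le_ReIm (z : C) : Cmod z <= Rabs (Re z) + Rabs (Im z).
Proof.
  assert (H := Cmod2_alt z). assert (0 <= Cmod z) by apply Cmod_ge_0.
  assert (0 <= Rabs (Re z)) by apply Rabs_pos. assert (0 <= Rabs (Im z)) by apply Rabs_pos.
  assert (Re z ^ 2 = Rabs (Re z) ^ 2) by (rewrite pow2_abs; reflexivity).
  assert (Im z ^ 2 = Rabs (Im z) ^ 2) by (rewrite pow2_abs; reflexivity).
  nra.
Qed.

Lemma PSg_R eps eps' b2 l : b2 <> 0 -> forall n,
  PSg eps eps' (fun n => powerRZ b2 (l + Z.of_nat n)) n = powerRZ b2 l * PSR eps eps' b2 n.
Proof.
  intros Hb n. induction n as [|n IH]; simpl. ring.
  rewrite IH, powerRZ_shift by exact Hb. ring.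
Qed.

Lemma PSg_Re eps eps' (b3 : C) l : b3 <> 0%C -> forall n,
  PSg eps eps' (fun n => Re (zpowC b3 (l + Z.of_nat n))) n = Re (zpowC b3 l * PSC eps eps' b3 n)%C.
Proof.
  intros Hb n. induction n as [|n IH]; simpl PSg; simpl PSC.
  - destruct (zpowC b3 l); simpl; ring.
  - rewrite IH, zpowC_shift by exact Hb.
    rewrite Cmult_plus_distr_l, <- Re_scal. 
    replace (zpowC b3 l * (RtoC (IZR (dd eps eps' n)) * Cpow b3 n))%C with (RtoC (IZR (dd eps eps' n)) * (zpowC b3 l * Cpow b3 n))%C by ring.
    destruct (zpowC b3 l * PSC eps eps' b3 n)%C, (RtoC (IZR (dd eps eps' n)) * (zpowC b3 l * Cpow b3 n))%C; simpl; ring.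
Qed.

Lemma PSg_Im eps eps' (b3 : C) l : b3 <> 0%C -> forall n,
  PSg eps eps' (fun n => Im (zpowC b3 (l + Z.of_nat n))) n = Im (zpowC b3 l * PSC eps eps' b3 n)%C.
Proof.
  intros Hb n. induction n as [|n IH]; simpl PSg; simpl PSC.
  - destruct (zpowC b3 l); simpl; ring.
  - rewrite IH, zpowC_shift by exact Hb.
    rewrite Cmult_plus_distr_l, <- Im_scal. 
    replace (zpowC b3 l * (RtoC (IZR (dd eps eps' n)) * Cpow b3 n))%C with (RtoC (IZR (dd eps eps' n)) * (zpowC b3 l * Cpow b3 n))%C by ring.
    destruct (zpowC b3 l * PSC eps eps' b3 n)%C, (RtoC (IZR (dd eps eps' n)) * (zpowC b3 l * Cpow b3 n))%C; simpl; ring.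
Qed.

Lemma alpha_value_eq b2 b3 l eps : alpha_value b2 b3 l eps =
  (Series (fun n => IZR (b2Z (eps n)) * powerRZ b2 (l + Z.of_nat n)),
   (Series (fun n => IZR (b2Z (eps n)) * Re (zpowC b3 (l + Z.of_nat n))),
    Series (fun n => IZR (b2Z (eps n)) * Im (zpowC b3 (l + Z.of_nat n))))).
Proof.
  unfold alpha_value. f_equal. f_equal; apply Series_ext; intro n; simpl snd.
  apply Re_scal. apply Im_scal.
Qed.

Lemma lim_unique0 u (a : R) : is_lim_seq u a -> is_lim_seq u 0 -> a = 0.
Proof.
  intros H1 H2. apply is_lim_seq_unique in H1, H2. rewrite H1 in H2. apply Rbar_finite_eq in H2. exact H2.
Qed.

Lemma abs0 u : is_lim_seq u 0 -> is_lim_seq (fun n => Rabs (u n)) 0.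
Proof. intro H. apply is_lim_seq_abs in H. simpl in H. rewrite Rabs_R0 in H. exact H. Qed.

Lemma value_iff b2 (b3 : C) l eps eps' : b2 <> 0 -> Rabs b2 < 1 -> b3 <> 0%C -> Cmod b3 < 1 ->
  (alpha_value b2 b3 l eps = alpha_value b2 b3 l eps' <->
   is_lim_seq (PSR eps eps' b2) 0 /\ is_lim_seq (fun n => Cmod (PSC eps eps' b3 n)) 0).
Proof.
  intros Hb2 Hr2 Hb3 Hr3.
  set (gR := fun n => powerRZ b2 (l + Z.of_nat n)).
  set (gRe := fun n => Re (zpowC b3 (l + Z.of_nat n))).
  set (gIm := fun n => Im (zpowC b3 (l + Z.of_nat n))).
  set (c := zpowC b3 l).
  assert (Hc : c <> 0%C) by (apply zpowC_nz; exact Hb3).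
  assert (Hcm : 0 < Cmod c) by (apply Cmod_gt_0; exact Hc).
  assert (Hk : powerRZ b2 l <> 0) by (apply powerRZ_NOR; exact Hb2).
  assert (BR : forall n, Rabs (gR n) <= Rabs (powerRZ b2 l) * Rabs b2 ^ n).
  { intro n. unfold gR. rewrite powerRZ_shift by exact Hb2. rewrite Rabs_mult, RPow_abs. lra. }
  assert (BRe : forall n, Rabs (gRe n) <= Cmod c * Cmod b3 ^ n).
  { intro n. unfold gRe. rewrite zpowC_shift by exact Hb3. eapply Rle_trans; [apply re_le_Cmod|].
    rewrite Cmod_mult, Cmod_pow. fold c. lra. }
  assert (BIm : forall n, Rabs (gIm n) <= Cmod c * Cmod b3 ^ n).
  { intro n. unfold gIm. rewrite zpowC_shift by exact Hb3. eapply Rle_trans; [apply im_le_Cmod|].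
    rewrite Cmod_mult, Cmod_pow. fold c. lra. }
  assert (Hr2' : 0 <= Rabs b2 < 1) by (split; [apply Rabs_pos|exact Hr2]).
  assert (Hr3' : 0 <= Cmod b3 < 1) by (split; [apply Cmod_ge_0|exact Hr3]).
  pose proof (series_diff eps eps' gR _ _ Hr2' BR) as LR.
  pose proof (series_diff eps eps' gRe _ _ Hr3' BRe) as LRe.
  pose proof (series_diff eps eps' gIm _ _ Hr3' BIm) as LIm.
  assert (ER : forall n, PSg eps eps' gR n = powerRZ b2 l * PSR eps eps' b2 n) by (apply PSg_R; exact Hb2).
  assert (ERe : forall n, PSg eps eps' gRe n = Re (c * PSC eps eps' b3 n)%C) by (apply PSg_Re; exact Hb3).
  assert (EIm : forall n, PSg eps eps' gIm n = Im (c * PSC eps eps' b3 n)%C) by (apply PSg_Im; exact Hb3).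
  rewrite !alpha_value_eq. fold gR gRe gIm.
  split.
  - intro H. injection H as H1 H2 H3. unfold gR in LR; unfold gRe in LRe; unfold gIm in LIm.
    rewrite H1, Rminus_diag in LR. rewrite H2, Rminus_diag in LRe. rewrite H3, Rminus_diag in LIm.
    split.
    + apply (is_lim_seq_ext (fun n => / powerRZ b2 l * PSg eps eps' gR n)).
      { intro n. rewrite ER. field. exact Hk. }
      replace (Finite 0) with (Rbar_mult (/ powerRZ b2 l) 0) by (simpl; f_equal; ring).
      apply is_lim_seq_scal_l. exact LR.
    + apply (is_lim_seq_le_le (fun _ => 0) _ (fun n => / Cmod c * (Rabs (PSg eps eps' gRe n) + Rabs (PSg eps eps' gIm n)))).
      * intro n. split; [apply Cmod_ge_0|]. rewrite ERe, EIm.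
        pose proof (Cmod_le_ReIm (c * PSC eps eps' b3 n)%C) as T. rewrite Cmod_mult in T.
        apply (Rmult_le_reg_l (Cmod c)); [exact Hcm|]. rewrite <- Rmult_assoc, Rinv_r, Rmult_1_l by lra. exact T.
      * apply is_lim_seq_const.
      * replace (Finite 0) with (Rbar_mult (/ Cmod c) (Finite (0 + 0))) by (simpl; f_equal; ring).
        apply is_lim_seq_scal_l. apply is_lim_seq_plus'; apply abs0; assumption.
  - intros [H1 H2].
    assert (L1 : is_lim_seq (PSg eps eps' gR) 0).
    { apply (is_lim_seq_ext (fun n => powerRZ b2 l * PSR eps eps' b2 n)); [intro n; rewrite ER; reflexivity|].
      replace (Finite 0) with (Rbar_mult (powerRZ b2 l) 0) by (simpl; f_equal; ring).
      apply is_lim_seq_scal_l. exact H1. }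
    assert (Lc : is_lim_seq (fun n => Cmod c * Cmod (PSC eps eps' b3 n)) 0).
    { replace (Finite 0) with (Rbar_mult (Cmod c) 0) by (simpl; f_equal; ring).
      apply is_lim_seq_scal_l. exact H2. }
    assert (L2 : is_lim_seq (PSg eps eps' gRe) 0).
    { apply is_lim_seq_spec. apply is_lim_seq_spec in Lc. intro e. destruct (Lc e) as [N HN]. exists N. intros n Hn.
      specialize (HN n Hn). rewrite Rminus_0_r in *. rewrite ERe.
      eapply Rle_lt_trans; [|exact HN]. rewrite (Rabs_pos_eq (Cmod c * _)) by (apply Rmult_le_pos; apply Cmod_ge_0).
      rewrite <- Cmod_mult. apply re_le_Cmod. }
    assert (L3 : is_lim_seq (PSg eps eps' gIm) 0).
    { apply is_lim_seq_spec. apply is_lim_seq_spec in Lc. intro e. destruct (Lc e) as [N HN]. exists N. intros n Hn.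
      specialize (HN n Hn). rewrite Rminus_0_r in *. rewrite EIm.
      eapply Rle_lt_trans; [|exact HN]. rewrite (Rabs_pos_eq (Cmod c * _)) by (apply Rmult_le_pos; apply Cmod_ge_0).
      rewrite <- Cmod_mult. apply im_le_Cmod. }
    pose proof (lim_unique0 _ _ LR L1). pose proof (lim_unique0 _ _ LRe L2). pose proof (lim_unique0 _ _ LIm L3).
    unfold gR, gRe, gIm in *. f_equal; [lra|]. f_equal; lra.
Qed.

Lemma PSR_Asum eps eps' be n : PSR eps eps' be n = Asum be eps n - Asum be eps' n.
Proof.
  induction n as [|n IH]; simpl. ring. rewrite IH. unfold dd. rewrite minus_IZR. ring.
Qed.

Lemma no1111 eps eps' be : 19/10 <= be -> PR be = 0 -> inDinf eps -> inDinf eps' -> forall m,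
  vseq eps eps' m <> mk4 1 1 1 1 /\ vseq eps eps' m <> mk4 (-1) (-1) (-1) (-1).
Proof.
  intros Hb Hp D1 D2 m. pose proof (vseq_R eps eps' be m Hp) as E. rewrite PSR_Asum in E.
  assert (H4 : be^4 = be^3 + be^2 + be + 1) by (unfold PR in Hp; lra).
  pose proof (Asum_lt be eps Hb H4 D1 m). pose proof (Asum_lt be eps' Hb H4 D2 m).
  pose proof (Asum_nonneg be eps m ltac:(lra)). pose proof (Asum_nonneg be eps' m ltac:(lra)).
  assert (0 < be^m) by (apply pow_lt; lra). assert (0 < be^4) by (apply pow_lt; lra).
  assert (P1 : phiR be (mk4 1 1 1 1) = be^4) by (rewrite H4; simpl; ring).
  assert (P2 : phiR be (mk4 (-1) (-1) (-1) (-1)) = - be^4) by (rewrite H4; simpl; ring).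
  split; intro Hv; rewrite Hv in E; [rewrite P1 in E|rewrite P2 in E].
  - assert (be^4 * be^m = be^4 * (Asum be eps m - Asum be eps' m)) by (rewrite <- E; ring).
    assert (be^m = Asum be eps m - Asum be eps' m) by (apply (Rmult_eq_reg_l (be^4)); lra). lra.
  - assert (- be^4 * be^m = be^4 * (Asum be eps m - Asum be eps' m)) by (rewrite <- E; ring).
    assert (- be^m = Asum be eps m - Asum be eps' m) by (apply (Rmult_eq_reg_l (be^4)); lra). lra.
Qed.

Lemma PHI_succ b2 (b3 : C) v a b : PR b2 = 0 -> b2 <> 0 -> PC b3 = 0%C -> b3 <> 0%C ->
  PHI b2 b3 (succv v (b2Z a - b2Z b)) = edge_target b2 b3 (PHI b2 b3 v) a b.
Proof.
  intros H2 H2' H3 H3'. unfold PHI, edge_target, RCadd, RCscal, alz. simpl fst; simpl snd. f_equal.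
  - pose proof (phiR_succ b2 v (b2Z a - b2Z b) H2) as E.
    simpl powerRZ. apply (Rmult_eq_reg_r b2); [|exact H2']. rewrite E. field. exact H2'.
  - pose proof (phiC_succ b3 v (b2Z a - b2Z b) H3) as E.
    try change (zpowC b3 3) with (Cpow b3 3).
    assert (F : phiC b3 (succv v (b2Z a - b2Z b)) = (phiC b3 (succv v (b2Z a - b2Z b)) * b3 / b3)%C)
      by (field; exact H3').
    rewrite F, E. simpl. field. exact H3'.
Qed.

Lemma pow_le1 x n : 0 <= x <= 1 -> x^n <= 1.
Proof. intro H. induction n; simpl; nra. Qed.

Lemma pow_small3 a m : 0 <= a <= 10/7 -> (m <= 3)%nat -> a^m <= 3.
Proof.
  intros Ha Hm. eapply Rle_trans. apply pow_incr. exact Ha.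
  eapply Rle_trans. apply Rle_pow. lra. exact Hm. simpl. lra.
Qed.

Lemma powerRZ_small r k : 7/10 <= Rabs r <= 1 -> (-3 <= k <= 3)%Z -> Rabs (powerRZ r k) <= 3.
Proof.
  intros Hr Hk. assert (Hz : r <> 0) by (intro h; rewrite h, Rabs_R0 in Hr; lra).
  destruct (Z_le_gt_dec 0 k) as [h|h].
  - destruct (Z_of_nat_complete k h) as [m ->]. rewrite <- pow_powerRZ, <- RPow_abs.
    assert (Rabs r ^ m <= 1) by (apply pow_le1; lra). lra.
  - assert (exists m, k = (- Z.of_nat (S m))%Z /\ (S m <= 3)%nat) as [m [-> Hm]].
    { exists (Z.to_nat (- k) - 1)%nat. split; lia. }
    replace (- Z.of_nat (S m))%Z with (Zneg (Pos.of_succ_nat m)) by (simpl; reflexivity).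
    simpl powerRZ. rewrite SuccNat2Pos.id_succ. rewrite Rabs_inv, <- RPow_abs, <- pow_inv.
    apply pow_small3; [|exact Hm]. split. apply Rlt_le, Rinv_0_lt_compat; lra.
    apply (Rmult_le_reg_r (Rabs r)); [lra|]. rewrite Rinv_l by lra. lra.
Qed.

Lemma zpowC_small (z : C) k : 7/10 <= Cmod z <= 1 -> (-3 <= k <= 3)%Z -> Cmod (zpowC z k) <= 3.
Proof.
  intros Hr Hk. assert (Hz : z <> 0%C) by (intro h; rewrite h, Cmod_0 in Hr; lra).
  destruct (Z_le_gt_dec 0 k) as [h|h].
  - destruct (Z_of_nat_complete k h) as [m ->]. rewrite zpowC_nat, Cmod_pow.
    assert (Cmod z ^ m <= 1) by (apply pow_le1; lra). lra.
  - assert (exists m, k = (- Z.of_nat m)%Z /\ (m <= 3)%nat) as [m [-> Hm]].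
    { exists (Z.to_nat (- k)). split; lia. }
    rewrite zpowC_negnat, Cmod_pow, Cmod_inv by exact Hz.
    apply pow_small3; [|exact Hm]. split. apply Rlt_le, Rinv_0_lt_compat; lra.
    apply (Rmult_le_reg_r (Cmod z)); [lra|]. rewrite Rinv_l by lra. lra.
Qed.

Definition bnd (n : R) (x : RC) : Prop := Rabs (fst x) <= n /\ Cmod (snd x) <= n.
Lemma bnd_add a b x y : bnd a x -> bnd b y -> bnd (a + b) (RCadd x y).
Proof.
  intros [H1 H2] [H3 H4]. unfold bnd, RCadd; simpl. split.
  - eapply Rle_trans; [apply Rabs_triang|lra].
  - eapply Rle_trans; [apply Cmod_triangle|lra].
Qed.
Lemma bnd_opp a x : bnd a x -> bnd a (RCopp x).
Proof. intros [H1 H2]. unfold bnd, RCopp; simpl. rewrite Rabs_Ropp, Cmod_opp. auto. Qed.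
Lemma bnd_alz b2 (b3 : C) k : 7/10 <= Rabs b2 <= 1 -> 7/10 <= Cmod b3 <= 1 -> (-3 <= k <= 3)%Z -> bnd 3 (alz b2 b3 k).
Proof. intros. split; simpl. apply powerRZ_small; auto. apply zpowC_small; auto. Qed.
Lemma bnd_scal a c x : bnd a x -> bnd a (RCscal (b2Z c) x).
Proof.
  intros [H1 H2]. unfold bnd, RCscal; simpl. rewrite Rabs_mult, Cmod_mult.
  destruct c; simpl.
  - rewrite Rabs_R1. replace (Cmod (RtoC 1)) with 1 by (rewrite Cmod_R, Rabs_R1; reflexivity). lra.
  - rewrite Rabs_R0. replace (Cmod (RtoC 0)) with 0 by (rewrite Cmod_R, Rabs_R0; reflexivity).
    pose proof (Cmod_ge_0 (snd x)). pose proof (Rabs_pos (fst x)). nra.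
Qed.
Lemma bnd_weak a b x : bnd a x -> a <= b -> bnd b x.
Proof. intros [H1 H2] h. split; lra. Qed.

Lemma bnd_alsum b2 (b3 : C) ks : 7/10 <= Rabs b2 <= 1 -> 7/10 <= Cmod b3 <= 1 ->
  List.Forall (fun k => (-3 <= k <= 3)%Z) ks -> bnd (3 * INR (List.length ks)) (alsum b2 b3 ks).
Proof.
  intros H2 H3 HF. induction HF as [|k ks Hk HF IH].
  - simpl; split; simpl. rewrite Rabs_R0; lra. rewrite Cmod_0; lra.
  - change (alsum b2 b3 (k :: ks)) with (RCadd (alz b2 b3 k) (alsum b2 b3 ks)).
    change (List.length (k::ks)) with (S (List.length ks)).
    replace (3 * INR (S (List.length ks))) with (3 + 3 * INR (List.length ks)) by (rewrite S_INR; ring).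
    apply bnd_add; [apply bnd_alz|]; assumption.
Qed.

Lemma inS_bound b2 (b3 : C) s : 7/10 <= Rabs b2 <= 1 -> 7/10 <= Cmod b3 <= 1 -> inS b2 b3 s -> bnd 12 s.
Proof.
  intros H2 H3 [[c0 [c1 [c2 [c3 [_ Hs]]]]] | [ks [Hks Hs]]].
  - assert (B : bnd 12 (RCadd (RCscal (b2Z c0) (alz b2 b3 0))
      (RCadd (RCscal (b2Z c1) (alz b2 b3 1))
      (RCadd (RCscal (b2Z c2) (alz b2 b3 2)) (RCscal (b2Z c3) (alz b2 b3 3)))))).
    { replace 12 with (3 + (3 + (3 + 3))) by ring.
      repeat apply bnd_add; apply bnd_scal; apply bnd_alz; auto; lia. }
    destruct Hs as [ -> | -> ]; [exact B| apply bnd_opp; exact B].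
  - assert (B : bnd 12 (alsum b2 b3 ks)).
    { apply (bnd_weak (3 * INR (List.length ks))).
      - apply bnd_alsum; auto.
        destruct Hks as [ -> | [ -> | -> ]]; repeat constructor; lia.
      - destruct Hks as [ -> | [ -> | -> ]]; simpl; lra. }
    destruct Hs as [ -> | -> ]; [exact B| apply bnd_opp; exact B].
Qed.

Lemma Cmod_xy x y : Cmod (x,y) ^ 2 = x^2 + y^2.
Proof. rewrite Cmod2_alt. reflexivity. Qed.

Lemma phi_bound_R (phi P rho : R) n : 0 < rho -> phi * rho^n = rho^4 * P -> P <= rho^n / (1 - rho) -> rho < 1 ->
  phi <= rho^4 / (1 - rho).
Proof.
  intros Hr E HP Hr1. assert (0 < rho^n) by (apply pow_lt; lra). assert (0 < rho^4) by (apply pow_lt; lra).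
  apply (Rmult_le_reg_r (rho^n)); [lra|]. rewrite E.
  replace (rho ^ 4 / (1 - rho) * rho ^ n) with (rho^4 * (rho^n / (1 - rho))) by (field; lra).
  apply Rmult_le_compat_l; lra.
Qed.

Lemma dd_abs eps eps' k : Rabs (IZR (dd eps eps' k)) <= 1.
Proof. destruct (dd_range eps eps' k) as [h|[h|h]]; rewrite h; unfold Rabs; destruct Rcase_abs; lra. Qed.

Lemma geom0 K rho : 0 <= rho < 1 -> is_lim_seq (fun n => K * rho^n) 0.
Proof.
  intro H. replace (Finite 0) with (Rbar_mult K 0) by (simpl; f_equal; ring).
  apply is_lim_seq_scal_l. apply is_lim_seq_geom. rewrite Rabs_pos_eq; lra.
Qed.

Theorem corollary3p4 :
  forall (b2 : R) (b3 : C),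
    PR b2 = 0 -> b2 < 0 ->
    PC b3 = 0%C -> 0 < Im b3 ->
  forall (l : Z) (eps eps' : nat -> bool),
    inDinf eps -> inDinf eps' ->
    (alpha_value b2 b3 l eps = alpha_value b2 b3 l eps' <->
     infinite_path b2 b3 eps eps').
Proof.
  intros b2 b3 H2 H2n H3 H3i l eps eps' D1 D2.
  destruct (b2_bounds b2 H2 H2n) as [Hr1 Hr2].
  destruct beta_ex as [be [Hbe Pbe]].
  assert (Hbe0 : 0 < be) by (unfold s1 in Hbe; lra).
  destruct b3 as [x y]. simpl in H3i.
  destruct (b3_facts b2 be x y H2 Pbe H2n Hbe0 H3 H3i) as [Hx Hq].
  pose proof (q_bounds b2 be x y (conj Hr1 Hr2) Hbe Hx Hq) as Hqb.
  destruct (mono_bounds b2 be x y (conj Hr1 Hr2) Hbe Hx Hq) as [M1 [M2 [M3 [M4 [M5 [M6 [M7 [M8 M9]]]]]]]].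
  assert (Hb2nz : b2 <> 0) by lra.
  assert (Hb3nz : ((x, y) : C) <> 0%C).
  { intro h. apply (f_equal snd) in h. simpl in h. lra. }
  set (rho2 := Rabs b2).
  assert (Hrho2 : rho2 = - b2) by (unfold rho2; rewrite Rabs_left; lra).
  assert (Rho2 : 7/10 <= rho2 <= 774804113216 / 1000000000000) by (unfold r1, r2 in *; lra).
  set (rho3 := Cmod (x, y)).
  assert (Rho3sq : rho3 ^ 2 = x^2 + y^2) by apply Cmod_xy.
  assert (Rho3p : 0 <= rho3) by apply Cmod_ge_0.
  assert (Rho3 : 7/10 <= rho3 <= 81827609878 / 100000000000).
  { unfold c_ql, c_qh in Hqb. split; nra. }
  rewrite value_iff by (try exact Hb2nz; try exact Hb3nz; fold rho2 rho3; lra).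
  split.
  - intros [L1 L2].
    assert (BR : forall n, Rabs (PSR eps eps' b2 n) <= rho2^n / (1 - rho2)).
    { apply boundR. lra.
      - intro k. simpl. replace (PSR eps eps' b2 k + IZR (dd eps eps' k) * b2 ^ k - PSR eps eps' b2 k)
          with (IZR (dd eps eps' k) * b2 ^ k) by ring.
        rewrite Rabs_mult, <- RPow_abs. fold rho2. assert (0 <= rho2^k) by (apply pow_le; lra).
        eapply Rle_trans; [apply Rmult_le_compat_r; [assumption| apply dd_abs]|]. rewrite Rmult_1_l; apply Rle_refl.
      - apply abs0; exact L1. }
    assert (BC : forall n, Cmod (PSC eps eps' (x,y) n) <= rho3^n / (1 - rho3)).
    { apply boundC. lra.
      - intro k. simpl PSC. replace (PSC eps eps' (x,y) k + RtoC (IZR (dd eps eps' k)) * Cpow (x,y) k - PSC eps eps' (x,y) k)%C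
          with (RtoC (IZR (dd eps eps' k)) * Cpow (x,y) k)%C by ring.
        rewrite Cmod_mult, Cmod_pow, Cmod_R. fold rho3. assert (0 <= rho3^k) by (apply pow_le; lra).
        eapply Rle_trans; [apply Rmult_le_compat_r; [assumption| apply dd_abs]|]. rewrite Rmult_1_l; apply Rle_refl.
      - exact L2. }
    assert (PB2 : forall n, Rabs (phiR b2 (vseq eps eps' n)) <= rho2^4 / (1 - rho2)).
    { intro n. apply (phi_bound_R _ (Rabs (PSR eps eps' b2 n)) _ n); try lra.
      - unfold rho2. rewrite !RPow_abs, <- !Rabs_mult. f_equal. apply vseq_R; exact H2.
      - apply BR. }
    assert (PB3 : forall n, Cmod (phiC (x,y) (vseq eps eps' n)) <= rho3^4 / (1 - rho3)).
    { intro n. apply (phi_bound_R _ (Cmod (PSC eps eps' (x,y) n)) _ n); try lra.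
      - unfold rho3. rewrite <- !Cmod_pow, <- !Cmod_mult. f_equal. apply vseq_C; exact H3.
      - apply BC. }
    assert (K2 : rho2^4 / (1 - rho2) * 1000000000000 <= 1600321413865).
    { assert (rho2^4 <= (774804113216 / 1000000000000)^4) by (apply pow_incr; lra).
      assert (/ (1 - rho2) <= / (1 - 774804113216 / 1000000000000)) by (apply Rinv_le_contravar; lra).
      assert (0 <= rho2^4) by (apply pow_le; lra).
      assert (rho2^4 / (1 - rho2) <= (774804113216 / 1000000000000)^4 / (1 - 774804113216 / 1000000000000)).
      { unfold Rdiv. apply Rmult_le_compat; try lra. apply Rlt_le, Rinv_0_lt_compat; lra. }
      lra. }
    assert (K3 : (rho3^4 / (1 - rho3))^2 * 1000000000000^3 <= 6086600879099337715362959135052796094).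
    { set (u := 81827609878 / 100000000000).
      assert (rho3^4 <= u^4) by (apply pow_incr; unfold u; lra).
      assert (/ (1 - rho3) <= / (1 - u)) by (apply Rinv_le_contravar; unfold u in *; lra).
      assert (0 <= rho3^4) by (apply pow_le; lra).
      assert (0 <= rho3^4 / (1 - rho3)) by (apply Rmult_le_pos; [lra| apply Rlt_le, Rinv_0_lt_compat; lra]).
      assert (rho3^4 / (1 - rho3) <= u^4 / (1 - u)).
      { unfold Rdiv. apply Rmult_le_compat; try lra. apply Rlt_le, Rinv_0_lt_compat; lra. }
      assert ((rho3^4 / (1 - rho3))^2 <= (u^4 / (1 - u))^2) by (apply pow_incr; lra).
      unfold u in *. lra. }
    assert (HDz : IZR Dz = 1000000000000) by reflexivity.
    assert (Hbad : forall m, bad (vseq eps eps' m) = false).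
    { intro m. destruct (no1111 eps eps' be ltac:(unfold s1 in Hbe; lra) Pbe D1 D2 m) as [N1' N2'].
      unfold bad.
      destruct (veqb (vseq eps eps' m) (mk4 1 1 1 1)) eqn:E1.
      { apply veqb_eq in E1. contradiction. }
      destruct (veqb (vseq eps eps' m) (mk4 (-1) (-1) (-1) (-1))) eqn:E2.
      { apply veqb_eq in E2. contradiction. }
      destruct (viol2 (vseq eps eps' m)) eqn:E3.
      { exfalso. apply viol2_sound with (r := b2) in E3; try (unfold IntOK; simpl fst; simpl snd; rewrite HDz; assumption).
        rewrite HDz in E3. specialize (PB2 m).
        assert (Rabs (phiR b2 (vseq eps eps' m)) * 1000000000000 <= rho2 ^ 4 / (1 - rho2) * 1000000000000)
          by (apply Rmult_le_compat_r; lra).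
        unfold K2D in E3. lra. }
      destruct (viol3 (vseq eps eps' m)) eqn:E4; [|reflexivity].
      exfalso. apply viol3_sound with (x := x) (y := y) in E4; try (unfold IntOK; simpl fst; simpl snd; rewrite HDz; assumption).
      rewrite HDz in E4. specialize (PB3 m).
      rewrite <- Cmod2_alt in E4.
      assert (0 <= Cmod (phiC (x, y) (vseq eps eps' m))) by apply Cmod_ge_0.
      assert (Cmod (phiC (x, y) (vseq eps eps' m)) ^ 2 <= (rho3 ^ 4 / (1 - rho3))^2) by (apply pow_incr; lra).
      assert (Cmod (phiC (x, y) (vseq eps eps' m)) ^ 2 * 1000000000000^3 <= (rho3 ^ 4 / (1 - rho3))^2 * 1000000000000^3)
        by (apply Rmult_le_compat_r; [apply pow_le; lra| lra]).
      unfold K3D in E4. lra. }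
    exists (fun n => PHI b2 (x,y) (vseq eps eps' n)). split.
    + apply PHI_zero.
    + intro n. pose proof (vseq_in eps eps' Hbad) as Hin. split; [|split].
      * apply Svec_inS; auto.
      * apply Svec_inS; auto.
      * simpl vseq. apply PHI_succ; assumption.
  - intros [e [He0 He]].
    assert (E : forall n, fst (e n) * b2^n = b2^4 * PSR eps eps' b2 n /\
                          (snd (e n) * Cpow (x,y) n = Cpow (x,y) 4 * PSC eps eps' (x,y) n)%C).
    { intro n. induction n as [|n [IH1 IH2]].
      - rewrite He0. unfold RC0. simpl. split; ring.
      - destruct (He n) as [_ [_ Hs]]. rewrite Hs. unfold edge_target, RCadd, RCscal, alz. simpl fst; simpl snd.
        simpl PSR; simpl PSC. unfold dd. split.
        + simpl powerRZ. simpl pow. simpl pow in IH1.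
          replace ((fst (e n) / b2 + IZR (b2Z (eps n) - b2Z (eps' n)) * (b2 * (b2 * (b2 * 1)))) * (b2 * b2 ^ n))
            with (fst (e n) * b2 ^ n + IZR (b2Z (eps n) - b2Z (eps' n)) * (b2 * (b2 * (b2 * (b2 * 1)))) * b2^n) by (field; exact Hb2nz).
          rewrite IH1. ring.
        + transitivity (snd (e n) * Cpow (x, y) n + RtoC (IZR (b2Z (eps n) - b2Z (eps' n))) * Cpow (x, y) 4 * Cpow (x,y) n)%C.
          { simpl. field. exact Hb3nz. }
          rewrite IH2. ring. }
    assert (B : forall n, bnd 12 (e n)).
    { intro n. apply (inS_bound b2 (x,y)); [fold rho2; lra | fold rho3; lra | apply (He n)]. }
    assert (Hp2 : 0 < rho2 ^ 4) by (apply pow_lt; lra).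
    assert (Hp3 : 0 < rho3 ^ 4) by (apply pow_lt; lra).
    split.
    + apply (is_lim_seq_le_le (fun n => - (12 / rho2^4 * rho2^n)) _ (fun n => 12 / rho2^4 * rho2^n)).
      * intro n. destruct (E n) as [E1 _]. destruct (B n) as [B1 _].
        assert (Hn : 0 < rho2^n) by (apply pow_lt; lra).
        assert (A1 : Rabs (PSR eps eps' b2 n) * rho2^4 = Rabs (fst (e n)) * rho2^n).
        { unfold rho2. rewrite !RPow_abs, <- !Rabs_mult. f_equal. rewrite E1. ring. }
        assert (Rabs (PSR eps eps' b2 n) <= 12 / rho2 ^ 4 * rho2 ^ n).
        { apply (Rmult_le_reg_r (rho2^4)); [lra|]. rewrite A1.
          replace (12 / rho2 ^ 4 * rho2 ^ n * rho2 ^ 4) with (12 * rho2^n) by (field; lra).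
          apply Rmult_le_compat_r; lra. }
        apply Rabs_le_between in H. exact H.
      * apply (is_lim_seq_ext (fun n => (- (12 / rho2^4)) * rho2^n)); [intro n; ring|].
        apply geom0; lra.
      * apply geom0; lra.
    + apply (is_lim_seq_le_le (fun n => 0) _ (fun n => 12 / rho3^4 * rho3^n)).
      * intro n. destruct (E n) as [_ E2]. destruct (B n) as [_ B2].
        assert (Hn : 0 < rho3^n) by (apply pow_lt; lra).
        assert (A1 : Cmod (PSC eps eps' (x,y) n) * rho3^4 = Cmod (snd (e n)) * rho3^n).
        { unfold rho3. rewrite <- !Cmod_pow, <- !Cmod_mult. f_equal. rewrite E2. ring. }
        split; [apply Cmod_ge_0|].
        apply (Rmult_le_reg_r (rho3^4)); [lra|]. rewrite A1.
        replace (12 / rho3 ^ 4 * rho3 ^ n * rho3 ^ 4) with (12 * rho3^n) by (field; lra).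
        apply Rmult_le_compat_r; lra.
      * apply is_lim_seq_const.
      * apply geom0; lra.
Qed.
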